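(* Let $q$ be a prime power with $q\equiv 1\pmod 3$, and let $t_1\in GF(q)$ be a root of $t^2+t+1=0$. Suppose $\pi\in AGL(1,q)$, $\pi(x)=ax+r$, is not an isolated vertex of $C_A(q)$. Then the neighbors of $\pi$ in $C_A(q)$ are exactly $\sigma_1$ and $\sigma_2$, where $\sigma_1(x)=at_1x+(a-t_1)F+r(1+t_1)$ and $\sigma_2(x)=a t_1^{-1}x+(a-t_1^{-1})F+r(1+t_1^{-1})$. In particular every non-isolated vertex of $C_A(q)$ has degree $2$.
   Context: $AGL(1,q)=\{x\mapsto ax+b: a\in GF(q)\setminus\{0\}, b\in GF(q)\}$, acting on $GF(q)$. For permutations $\pi,\sigma$ of a finite set, $hd(\pi,\sigma)$ is the number of points at which they differ. Fix a distinguished element $F\in GF(q)$. For a permutation $\pi$ of $GF(q)$, $\pi^{\triangle}$ is the permutation with $\pi^{\triangle}(\pi^{-1}(F))=\pi(F)$, $\pi^{\triangle}(F)=F$, and $\pi^{\triangle}(x)=\pi(x)$ otherwise. The contraction graph $C_A(q)$ has vertex set $AGL(1,q)$, with distinct $\pi,\sigma$ adjacent iff $hd(\pi^{\triangle},\sigma^{\triangle})=q-4$. *)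

(* Defs.v *)
From HB Require Import structures.
From mathcomp Require Import all_boot all_order all_algebra all_fingroup all_field.
Set Implicit Arguments. Unset Strict Implicit. Unset Printing Implicit Defensive.
Import GRing.Theory.
Local Open Scope ring_scope.

Section ContractionGraph.
Variable F : finFieldType.

Definition AGL : {set {perm F}} :=
  [set p : {perm F} | [exists a : F, exists b : F,
      (a != 0) && [forall x : F, p x == a * x + b]]].

Definition hd (f g : F -> F) : nat := #|[set x : F | f x != g x]|.

Definition contr (Fd : F) (p : {perm F}) : F -> F :=
  fun x => if x == Fd then Fd
           else if x == (p^-1)%g Fd then p Fd
           else p x.

Definition adjA (Fd : F) (p s : {perm F}) : bool :=
  (p != s) && (hd (contr Fd p) (contr Fd s) == (#|F| - 4)%N).

End ContractionGraph.

(* Main.v *)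
From HB Require Import structures.
From mathcomp Require Import all_boot all_order all_algebra all_fingroup all_field.
Require Import Defs.
From mathcomp Require Import zify ring.
Import GRing.Theory.
Set Implicit Arguments. Unset Strict Implicit.
Local Open Scope ring_scope.

Lemma three_neq0 (F : finFieldType) : (#|F| %% 3 = 1)%N -> (3%:R : F) != 0.
Proof.
move=> H; apply/negP => /eqP H3.
have ch : (3 \in [pchar F])%N by rewrite inE H3 eqxx.
have E := card_pprimeChar ch.
have g1 : (1 < #|F|)%N := finNzRing_gt1 F.
move: H g1; rewrite [#|F|]E.
case: (logn _ _) => [|n] //.
by rewrite expnS modnMr.
Qed.

Section S.
Variables (F : finFieldType) (Fd : F).

Definition B3 (x y z : F) : {set F} := x |: (y |: [set z]).

Lemma hdE (f g : F -> F) : (hd f g + #|[set x | f x == g x]|)%N = #|F|.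
Proof.
rewrite /hd addnC -(cardsC [set x | f x == g x]); congr (_ + _)%N; apply: eq_card => x.
by rewrite !inE.
Qed.

Lemma contr_sub (p s : {perm F}) :
 [set x | contr Fd p x == contr Fd s x] \subset
   B3 Fd ((p^-1)%g Fd) ((s^-1)%g Fd) :|: [set x | p x == s x].
Proof.
apply/subsetP => x; rewrite !inE /contr.
case: (x =P Fd) => // _; case: (x =P _) => // _; case: (x =P _) => //= _ ->.
Qed.

Lemma cover3 (A E : {set F}) x y z :
  A \subset B3 x y z :|: E -> (#|E| <= 1)%N -> #|A| = 4%N ->
  [/\ x \in A, y \in A, z \in A & [/\ x != y, x != z & y != z]].
Proof.
move=> sA E1 A4.
have s2 : A \subset (A :&: B3 x y z) :|: E.
  apply/subsetP => w wA; move/subsetP: sA => /(_ w wA); rewrite !inE wA.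
  by case/orP => ->; rewrite ?orbT.
have c1 := subset_leq_card s2.
have c2 := leq_card_setU (A :&: B3 x y z) E.
have c3 : (#|B3 x y z| <= 3)%N.
  by rewrite /B3 !cardsU1 cards1; case: (_ \notin _); case: (_ \notin _).
have c4 := subset_leq_card (subsetIr A (B3 x y z)).
have e3 : #|A :&: B3 x y z| = #|B3 x y z|.
  move: c1 c2 c3 c4; rewrite A4 => c1 [c2 _]; lia.
have eq : A :&: B3 x y z = B3 x y z.
  by apply/eqP; rewrite eqEcard subsetIr e3 leqnn.
have sB : B3 x y z \subset A by rewrite -eq subsetIl.
have b3 : #|B3 x y z| = 3%N by move: c1 c2; rewrite A4 e3 => c1 [c2 _]; lia.
move: b3; rewrite /B3 !cardsU1 cards1 !inE.
move/subsetP: sB => sB.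
have hx : x \in A by apply: sB; rewrite !inE eqxx.
have hy : y \in A by apply: sB; rewrite !inE eqxx orbT.
have hz : z \in A by apply: sB; rewrite !inE eqxx !orbT.
case: (x =P y) => [_|nxy]; case: (x =P z) => [_|nxz]; case: (y =P z) => [_|nyz] //= _.
Qed.


Variables (a r : F) (pi : {perm F}).
Hypotheses (a0 : a != 0) (hp : forall x, pi x = a * x + r) (hq : (#|F| %% 3 = 1)%N).

Lemma E1 (s : {perm F}) b s0 (hs : forall x, s x = b * x + s0) :
  pi != s -> (#|[set x | pi x == s x]| <= 1)%N.
Proof.
move=> ne; apply/card_le1_eqP => x y; rewrite !inE !hp !hs => /eqP e1 /eqP e2.
case: (a =P b) => [ab|nab].
  case/negP: ne; apply/eqP/permP => z; rewrite hp hs -ab.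
  by move: e1; rewrite ab => /addrI ->.
have d0 : a - b != 0 by rewrite subr_eq0; apply/eqP.
apply: (mulfI d0).
have h1 : (a - b) * x = s0 - r.
  apply/eqP; rewrite -subr_eq0; apply/eqP; transitivity ((a*x+r) - (b*x+s0)); [ring | by rewrite e1 subrr].
have h2 : (a - b) * y = s0 - r.
  apply/eqP; rewrite -subr_eq0; apply/eqP; transitivity ((a*y+r) - (b*y+s0)); [ring | by rewrite e2 subrr].
by rewrite h1 h2.
Qed.

Lemma card4 (s : {perm F}) : adjA Fd pi s ->
  #|[set x | contr Fd pi x == contr Fd s x]| = 4%N.
Proof.
case/andP => _ /eqP h.
have := hdE (contr Fd pi) (contr Fd s); rewrite h.
have g1 : (1 < #|F|)%N := finNzRing_gt1 F. move: hq g1. lia.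
Qed.

Lemma fwd (s : {perm F}) b s0 (hs : forall x, s x = b * x + s0) : adjA Fd pi s ->
  [/\ pi Fd != Fd, a^+2 + a*b + b^+2 = 0 & a*s0 = a^+2*Fd + a*r - b*Fd + b*r].
Proof.
move=> adj; have A4 := card4 adj.
case/andP: adj => ne _.
have [_ uA vA [_ _ _]] := cover3 (contr_sub pi s) (E1 hs ne) A4.
have [_ _ _ [uF vF uv]] := cover3 (contr_sub pi s) (E1 hs ne) A4.
set u := (pi^-1)%g Fd in uA uF uv.
set v := (s^-1)%g Fd in vA vF uv.
have pu : pi u = Fd by rewrite /u permKV.
have sv : s v = Fd by rewrite /v permKV.
have q1 : a * u + r - Fd = 0 by rewrite -hp pu subrr.
have q3 : b * v + s0 - Fd = 0 by rewrite -hs sv subrr.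
have q2 : b * u + s0 - (a * Fd + r) = 0.
  have uF' : (u == Fd) = false by rewrite eq_sym (negbTE uF).
  move: uA; rewrite inE /contr -/u -/v uF' eqxx (negbTE uv) => /eqP.
  by rewrite hs hp => ->; rewrite subrr.
have q4 : a * v + r - (b * Fd + s0) = 0.
  have vF' : (v == Fd) = false by rewrite eq_sym (negbTE vF).
  have vu : (v == u) = false by rewrite eq_sym (negbTE uv).
  move: vA; rewrite inE /contr -/u -/v vF' eqxx vu => /eqP.
  by rewrite hs hp => ->; rewrite subrr.
have piF : pi Fd != Fd.
  apply/eqP => e; case/eqP: uF; by rewrite /u -{2}e permK.
have w0 : (a - 1) * Fd + r != 0.
  by move: piF; rewrite hp; apply: contra => /eqP e; rewrite -subr_eq0; apply/eqP; rewrite -e; ring.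
have G : (a^+2 + a*b + b^+2) * ((a - 1) * Fd + r) =
   - (a + b) * (a * (b * u + s0 - (a * Fd + r)) - b * (a * u + r - Fd))
   - a * (b * (a * v + r - (b * Fd + s0)) - a * (b * v + s0 - Fd)) by ring.
rewrite q1 q2 q3 q4 in G.
have {}G : (a^+2 + a*b + b^+2) * ((a - 1) * Fd + r) = 0 by rewrite G; ring.
split => //.
  by move/eqP: G; rewrite mulf_eq0 (negbTE w0) orbF => /eqP.
apply/eqP; rewrite -subr_eq0; apply/eqP.
have -> : a * s0 - (a ^+ 2 * Fd + a * r - b * Fd + b * r) =
   a * (b * u + s0 - (a * Fd + r)) - b * (a * u + r - Fd) by ring.
by rewrite q1 q2; ring.
Qed.


Lemma bwd (c : F) (s : {perm F}) : c^+2 + c + 1 = 0 -> (3%:R : F) != 0 -> pi Fd != Fd ->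
  (forall x, s x = a * c * x + (a - c) * Fd + r * (1 + c)) -> adjA Fd pi s.
Proof.
move=> hc h3 piF hs.
have c0 : c != 0.
  apply/eqP => e; have : (1 : F) = 0 by rewrite -hc e; ring.
  by move/eqP; rewrite oner_eq0.
have c1 : 1 + c != 0.
  apply/eqP => e; have e' : c = -1 by apply/eqP; rewrite -subr_eq0 opprK addrC e.
  have : (1 : F) = 0 by rewrite -hc e'; ring.
  by move/eqP; rewrite oner_eq0.
have cn1 : c != 1.
  apply/eqP => e; move: h3; rewrite -hc e; apply/negP; rewrite negbK; apply/eqP; ring.
set u := (pi^-1)%g Fd. set v := (s^-1)%g Fd.
have pu : pi u = Fd by rewrite /u permKV.
have sv : s v = Fd by rewrite /v permKV.
have hsu : s u = pi Fd.
  apply/eqP; rewrite -subr_eq0; apply/eqP.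
  have -> : s u - pi Fd = c * (pi u - Fd) by rewrite !hs !hp; ring.
  by rewrite pu subrr mulr0.
have hpv : pi v = s Fd.
  apply/eqP; rewrite -subr_eq0; apply/eqP; apply: (mulfI c0); rewrite mulr0.
  have -> : c * (pi v - s Fd) = (s v - Fd) + (c^+2 + c + 1) * (Fd - a * Fd - r)
    by rewrite !hs !hp; ring.
  by rewrite sv hc subrr mul0r addr0.
have hsF : s Fd - Fd = (1 + c) * (pi Fd - Fd) by rewrite !hs !hp; ring.
have hsp : s Fd - pi Fd = c * (pi Fd - Fd) by rewrite !hs !hp; ring.
have w0 : pi Fd - Fd != 0 by rewrite subr_eq0.
have sF : s Fd != Fd by rewrite -subr_eq0 hsF mulf_neq0.
have spF : s Fd != pi Fd by rewrite -subr_eq0 hsp mulf_neq0.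
have d0 : a - a * c != 0.
  have -> : a - a * c = a * (1 - c) by ring.
  by rewrite mulf_neq0 // subr_eq0 eq_sym.
set s0 := (a - c) * Fd + r * (1 + c).
set e := (s0 - r) / (a - a * c).
have pe : pi e = s e.
  apply/eqP; rewrite -subr_eq0; apply/eqP.
  have -> : pi e - s e = e * (a - a * c) - (s0 - r) by rewrite hs hp /s0; ring.
  by rewrite /e divfK // subrr.
have uF : u != Fd by apply/eqP => e1; move: piF; rewrite -{1}e1 pu eqxx.
have vF : v != Fd by apply/eqP => e1; move: sF; rewrite -{1}e1 sv eqxx.
have uv : u != v by apply/eqP => e1; move: piF; rewrite -hsu e1 sv eqxx.
have eF : e != Fd by apply/eqP => e1; move: spF; rewrite -e1 pe eqxx.
have eu : e != u.
  by apply/eqP => e1; move: pe; rewrite e1 pu hsu => e2; move: piF; rewrite -e2 eqxx.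
have ev : e != v.
  by apply/eqP => e1; move: pe; rewrite e1 hpv sv => e2; move: sF; rewrite e2 eqxx.
have ne : pi != s by apply/eqP => e1; move: spF; rewrite e1 eqxx.
set A := [set x | contr Fd pi x == contr Fd s x].
have sub4 : Fd |: B3 u v e \subset A.
  have uF' : (u == Fd :> F) = false by exact: negbTE uF.
  have vF' : (v == Fd :> F) = false by exact: negbTE vF.
  have eF' : (e == Fd :> F) = false by exact: negbTE eF.
  have uv' : (u == v :> F) = false by exact: negbTE uv.
  have vu' : (v == u :> F) = false by rewrite eq_sym; exact: negbTE uv.
  have eu' : (e == u :> F) = false by exact: negbTE eu.
  have ev' : (e == v :> F) = false by exact: negbTE ev.
  apply/subsetP => x; rewrite !inE /contr -/u -/v.
  case/or4P => /eqP ->.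
  - by rewrite !eqxx.
  - by rewrite uF' eqxx uv' hsu.
  - by rewrite vF' eqxx vu' hpv.
  - by rewrite eF' eu' ev' pe.
have c4 : #|Fd |: B3 u v e| = 4%N.
  rewrite /B3 !cardsU1 cards1 !inE.
  by rewrite eq_sym (negbTE uF) eq_sym (negbTE vF) eq_sym (negbTE eF) (negbTE uv)
    eq_sym (negbTE eu) eq_sym (negbTE ev).
have le4 : (#|A| <= 4)%N.
  have h1 := subset_leq_card (contr_sub pi s).
  have [h2 _] := leq_card_setU (B3 Fd u v) [set x | pi x == s x].
  have h3' : (#|B3 Fd u v| <= 3)%N.
    by rewrite /B3 !cardsU1 cards1; case: (_ \notin _); case: (_ \notin _).
  have hs' : forall x, s x = a * c * x + s0 by move=> x; rewrite hs /s0 addrA.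
  have h4 := E1 hs' ne.
  apply: (leq_trans h1); apply: (leq_trans h2); exact: leq_add h3' h4.
have ge4 := subset_leq_card sub4; rewrite c4 in ge4.
have A4 : #|A| = 4%N by apply/eqP; rewrite eqn_leq le4 ge4.
have H := hdE (contr Fd pi) (contr Fd s); rewrite -/A A4 in H.
rewrite /adjA ne /=; apply/eqP.
by rewrite -H addnK.
Qed.

End S.

Lemma aglP (F : finFieldType) (s : {perm F}) : s \in AGL F ->
  exists b s0, b != 0 /\ forall x, s x = b * x + s0.
Proof.
rewrite inE => /existsP [b /existsP [s0 /andP [b0 /forallP h]]].
by exists b, s0; split => // x; apply/eqP.
Qed.

Lemma mkperm (F : finFieldType) (b s0 : F) : b != 0 ->
  {p : {perm F} | forall x, p x = b * x + s0 & p \in AGL F}.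
Proof.
move=> b0.
have inj : injective (fun x => b * x + s0) by move=> x y /addIr /(mulfI b0).
exists (perm inj) => [x|]; first by rewrite permE.
rewrite inE; apply/existsP; exists b; apply/existsP; exists s0.
by rewrite b0 /=; apply/forallP => x; rewrite permE.
Qed.

Lemma roots (F : finFieldType) (t1 a b : F) : t1^+2 + t1 + 1 = 0 -> a != 0 ->
  a^+2 + a*b + b^+2 = 0 -> t1^-1 = -1 - t1 -> b = a * t1 \/ b = a * t1^-1.
Proof.
move=> ht a0 h ti; rewrite ti.
have : (b - a * t1) * (b - a * (-1 - t1)) = 0.
  transitivity ((a^+2 + a*b + b^+2) - a^+2 * (t1^+2 + t1 + 1)); first ring.
  by rewrite h ht mulr0 subrr.
move/eqP; rewrite mulf_eq0 !subr_eq0 => /orP [] /eqP ->; [left|right] => //.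
Qed.
Unset Implicit Arguments.
Theorem lemma5 (F : finFieldType) (Fd t1 a r : F) (pi : {perm F}) :
  (#|F| %% 3 = 1)%N ->
  t1 ^+ 2 + t1 + 1 = 0 ->
  a != 0 ->
  (forall x, pi x = a * x + r) ->
  (exists2 s, s \in AGL F & adjA Fd pi s) ->
  (forall s : {perm F}, s \in AGL F ->
     (adjA Fd pi s <->
        ((forall x, s x = a * t1 * x + (a - t1) * Fd + r * (1 + t1)) \/
         (forall x, s x = a * t1^-1 * x + (a - t1^-1) * Fd + r * (1 + t1^-1)))))
  /\ #|[set s in AGL F | adjA Fd pi s]| = 2%N.
Proof.
move=> hq ht a0 hp [s0 s0A adj0].
have h3 := three_neq0 hq.
have t0 : t1 != 0.
  apply/eqP => e; have : (1 : F) = 0 by rewrite -ht e; ring.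
  by move/eqP; rewrite oner_eq0.
have ti : t1^-1 = -1 - t1.
  have e : t1 * (-1 - t1) = 1.
    transitivity (1 - (t1^+2 + t1 + 1)); first ring. by rewrite ht subr0.
  by rewrite -[RHS](mulKf t0) e mulr1.
have hc2 : (t1^-1)^+2 + t1^-1 + 1 = 0 by rewrite ti -ht; ring.
have piF : pi Fd != Fd.
  have [b [s1 [b0 hs]]] := aglP s0A.
  by have [] := fwd a0 hp hq hs adj0.
have hiff : forall s : {perm F}, s \in AGL F ->
     (adjA Fd pi s <->
        ((forall x, s x = a * t1 * x + (a - t1) * Fd + r * (1 + t1)) \/
         (forall x, s x = a * t1^-1 * x + (a - t1^-1) * Fd + r * (1 + t1^-1)))).
  move=> s sA; split.
    have [b [s1 [b0 hs]]] := aglP sA.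
    move=> adj; have [_ hb hs1] := fwd a0 hp hq hs adj.
    have gen : forall c, b = a * c -> forall x, s x = a * c * x + (a - c) * Fd + r * (1 + c).
      move=> c bc x; rewrite hs bc -addrA; congr (_ + _); apply: (mulfI a0).
      by rewrite hs1 bc; ring.
    by case: (roots ht a0 hb ti) => bc; [left|right]; apply: gen.
  case=> hs.
    exact: (bwd a0 hp ht h3 piF hs).
  exact: (bwd a0 hp hc2 h3 piF hs).
split => //.
have [p1 hp1 p1A] := mkperm ((a - t1) * Fd + r * (1 + t1)) (mulf_neq0 a0 t0).
have [p2 hp2 p2A] := mkperm ((a - t1^-1) * Fd + r * (1 + t1^-1))
   (mulf_neq0 a0 (invr_neq0 t0)).
have -> : [set s in AGL F | adjA Fd pi s] = [set p1; p2].
  apply/setP => s; rewrite inE in_set2.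
  case sA: (s \in AGL F) => /=.
    apply/idP/idP.
      move=> adj; case: (proj1 (hiff s sA) adj) => hs; apply/orP; [left|right]; apply/eqP/permP => x;
        by rewrite hs (hp1, hp2) addrA.
    case/orP => /eqP ->.
      by apply/(proj2 (hiff _ p1A)); left => x; rewrite hp1 addrA.
    by apply/(proj2 (hiff _ p2A)); right => x; rewrite hp2 addrA.
  apply/esym/negbTE/norP; split; apply/eqP => e; move: sA; rewrite e ?p1A ?p2A //.
rewrite cards2.
suff -> : p1 != p2 by [].
apply/eqP => e.
have E : a * t1 = a * t1^-1.
  transitivity (p1 1 - p1 0); first by rewrite !hp1; ring.
  by rewrite e !hp2; ring.
have tt : t1 = t1^-1 by apply: (mulfI a0).
have e1 : t1^+2 = 1 by rewrite expr2 {2}tt mulfV.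
move/negP: h3; apply; apply/eqP.
have -> : (3%:R : F) = (t1^+2 - 1) - ((t1^+2 + t1 + 1) - (t1^+2 - 1)) * (t1 - 2%:R) by ring.
by rewrite ht e1; ring.
Qed.
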